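(* Let $K$ be a perfect field with $\mathrm{char}(K)\neq 2$ and algebraic closure $K_a$. Suppose that $E\subset\mathbb{P}^2$ is an absolutely irreducible cubic curve defined over $K$, and that $B\subset E(K_a)$ is a $7$-element set which is a $\mathrm{Gal}(K)$-orbit. Assume that the image $G_B$ of $\mathrm{Gal}(K)$ in the group $\mathrm{Perm}(B)$ of all permutations of $B$ is either $\mathrm{Perm}(B)\cong\mathbf{S}_7$ or the alternating group $\mathbf{A}_7$. Then $B$ is in general position, i.e. no three points of $B$ lie on a line and no six points of $B$ lie on a conic. *)

(* Defs.v *)
From HB Require Import structures.
From mathcomp Require Import all_boot all_order all_algebra all_fingroup.
From mathcomp Require Import mpoly.
Set Implicit Arguments. Unset Strict Implicit. Unset Printing Implicit Defensive.
Import GRing.Theory.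
Local Open Scope ring_scope.

Definition perfect_field (K : fieldType) : Prop :=
  (forall p : nat, p \notin [pchar K]) \/
  (exists2 p : nat, p \in [pchar K] & forall y : K, exists x : K, x ^+ p = y).

Definition is_algebraic_closure (K : fieldType) (L : closedFieldType)
  (iota : {rmorphism K -> L}) : Prop :=
  forall x : L, exists2 p : {poly K}, p != 0 & root (map_poly iota p) x.

Definition in_Gal (K : fieldType) (L : closedFieldType)
  (iota : {rmorphism K -> L}) (s : {rmorphism L -> L}) : Prop :=
  bijective s /\ forall x : K, s (iota x) = iota x.

(* Homogeneous coordinates of points of P^2(L). *)
Definition point3 (L : fieldType) := 'I_3 -> L.

Definition proj_nonzero (L : fieldType) (x : point3 L) : Prop := exists i, x i != 0.

Definition proj_eq (L : fieldType) (x y : point3 L) : Prop :=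
  exists2 c : L, c != 0 & forall i, y i = c * x i.

Definition gal_act (L : fieldType) (s : {rmorphism L -> L}) (x : point3 L)
  : point3 L := fun i => s (x i).

Definition mconstant (L : fieldType) (G : {mpoly L[3]}) : Prop := (msize G <= 1)%N.

Definition abs_irreducible (L : fieldType) (F : {mpoly L[3]}) : Prop :=
  ~ mconstant F /\ forall G H : {mpoly L[3]}, F = G * H -> mconstant G \/ mconstant H.

Definition lie_on_curve_of_degree (L : fieldType) (d m : nat) (xs : 'I_m -> point3 L)
  : Prop :=
  exists Q : {mpoly L[3]}, [/\ Q != 0, Q \is d.-homog & forall i, Q.@[xs i] = 0].

Definition general_position7 (L : fieldType) (b : 'I_7 -> point3 L) : Prop :=
  (forall f : 'I_3 -> 'I_7, injective f ->
     ~ lie_on_curve_of_degree 1 (fun i => b (f i))) /\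
  (forall f : 'I_6 -> 'I_7, injective f ->
     ~ lie_on_curve_of_degree 2 (fun i => b (f i))).

Definition in_image_GB (K : fieldType) (L : closedFieldType)
  (iota : {rmorphism K -> L}) (b : 'I_7 -> point3 L) (pi : 'S_7) : Prop :=
  exists s : {rmorphism L -> L}, in_Gal iota s /\
    forall i : 'I_7, proj_eq (gal_act s (b i)) (b (pi i)).

From mathcomp Require Import alt.
Definition Alt7 : {set 'S_7} := Alt 'I_7.

(* Main.v *)
Require Import Defs.
From HB Require Import structures.
From mathcomp Require Import all_boot all_order all_algebra all_fingroup.
From mathcomp Require Import mpoly alt zify ring.
Set Implicit Arguments. Unset Strict Implicit. Unset Printing Implicit Defensive.
Import GRing.Theory.
Local Open Scope ring_scope.

Lemma meval_rmorph (n : nat) (R S : comNzRingType) (f : {rmorphism R -> S})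
  (p : {mpoly R[n]}) (v : 'I_n -> R) :
  f (p.@[v]) = (map_mpoly f p).@[fun i => f (v i)].
Proof.
elim/mpolyind: p => [|c m p _ _ IH]; first by rewrite meval0 rmorph0 raddf0 meval0.
rewrite mevalD rmorphD raddfD /= mevalD IH; congr (_ + _).
rewrite map_mpolyZ map_mpolyX !mevalZ !mevalX rmorphM rmorph_prod; congr (_ * _).
by apply: eq_bigr => i _; rewrite rmorphXn.
Qed.

Lemma meval_homog (n : nat) (R : comNzRingType) (d : nat) (p : {mpoly R[n]})
  (c : R) (x : 'I_n -> R) :
  p \is d.-homog -> p.@[fun i => c * x i] = c ^+ d * p.@[x].
Proof.
move=> /dhomogP hp; rewrite !mevalE mulr_sumr; apply: eq_big_seq => m /hp hm.
have hm' : (\sum_i m i)%N = d by rewrite -(mdegE m); exact: hm.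
rewrite mulrCA; congr (_ * _).
rewrite -hm' -prodrXr -big_split /=; apply: eq_bigr => i _.
by rewrite exprMn.
Qed.

Section Restr.
Variable (L : fieldType) (n : nat).

Definition restr (p : {mpoly L[n]}) (V : 'I_n -> {poly L}) : {poly L} :=
  (map_mpoly (@polyC L) p).@[V].

Lemma restr_eval p V t : (restr p V).[t] = p.@[fun i => (V i).[t]].
Proof.
rewrite /restr -horner_evalE meval_rmorph.
have -> : map_mpoly (horner_eval t) (map_mpoly (@polyC L) p) = p.
  by apply/mpolyP => m; rewrite !mcoeff_map_mpoly /= horner_evalE hornerC.
by apply: meval_eq => i /=; rewrite horner_evalE.
Qed.
End Restr.

Lemma size_prod_lin (L : fieldType) (n : nat) (V : 'I_n -> {poly L}) (m : 'I_n -> nat)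
  (r : seq 'I_n) :
  (forall i, size (V i) <= 2)%N ->
  (size (\prod_(i <- r) V i ^+ m i)%R <= (\sum_(i <- r) m i).+1)%N.
Proof.
move=> hV; elim: r => [|i r IH]; first by rewrite !big_nil size_poly1.
rewrite !big_cons; apply: (leq_trans (size_mul_leq _ _)).
have h1 : (size (V i ^+ m i)%R <= (m i).+1)%N.
  apply: (leq_trans (size_exp_leq _ _)); rewrite ltnS.
  by have := hV i; case: (size (V i)) => [|[|[|]]] //= _; rewrite ?mul0n ?mul1n.
move: h1 IH; set a := size _; set b := size _; set c := (\sum_(j <- r) m j)%N.
by case: a => [|a]; case: b => [|b] /=; lia.
Qed.

Lemma restr_size (L : fieldType) (n : nat) (p : {mpoly L[n]}) (V : 'I_n -> {poly L}) :
  (forall i, size (V i) <= 2)%N -> (size (restr p V) <= msize p)%N.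
Proof.
move=> hV; rewrite /restr mevalE.
apply: (leq_trans (size_sum _ _ _)); apply/bigmax_leqP_seq => m hm _.
have hm' : m \in msupp p.
  by move: hm; rewrite !mcoeff_msupp mcoeff_map_mpoly polyC_eq0.
apply: (leq_trans (size_mul_leq _ _)).
have h1 := size_polyC_leq1 (p@_m); rewrite mcoeff_map_mpoly.
have h2 := size_prod_lin (fun i => m i) (index_enum _) hV.
have h3 := msize_mdeg_lt hm'; rewrite mdegE in h3.
move: h1 h2 h3; set a := size _; set b := size _; set c := (\sum_(j <- _) _)%N.
set d := msize p.
by case: a => [|a]; case: b => [|b] /=; lia.
Qed.

Section Inf.
Variable L : closedFieldType.

Lemma avoid_seq (s : seq L) : exists x, x \notin s.
Proof.
pose q := \prod_(a <- s) ('X - a%:P).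
have mq : q \is monic by apply: monic_prod_XsubC.
have q0 : q != 0 by apply: monic_neq0.
have sq : size (q * 'X) = (size s).+2 by rewrite size_mulX // size_prod_XsubC.
pose p := q * 'X - 1.
have sp : size p = (size s).+2.
  by rewrite /p size_polyDl ?size_polyN ?size_poly1 sq.
have : size p != 1%N by rewrite sp.
move/closed_rootP => [x]; rewrite /root /p !hornerE => /eqP hx.
exists x; rewrite -root_prod_XsubC -/q /root; apply/negP => /eqP hq.
by move: hx; rewrite hq mul0r sub0r => /eqP; rewrite oppr_eq0 oner_eq0.
Qed.

Lemma uniq_seq (k : nat) : exists s : seq L, uniq s /\ size s = k.
Proof.
elim: k => [|k [s [us ss]]]; first by exists [::].
have [x hx] := avoid_seq s; exists (x :: s); by rewrite /= hx us ss.
Qed.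

Lemma poly_vanish (q : {poly L}) : (forall t, q.[t] = 0) -> q = 0.
Proof.
move=> hq; apply/eqP; apply: contraT => q0.
have [s [us ss]] := uniq_seq (size q).
have : all (root q) s by apply/allP => x _; rewrite /root hq.
by move/(max_poly_roots q0)/(_ us); rewrite ss ltnn.
Qed.
End Inf.

Definition o0 : 'I_3 := @Ordinal 3 0 isT.
Definition o1 : 'I_3 := @Ordinal 3 1 isT.
Definition o2 : 'I_3 := @Ordinal 3 2 isT.

Lemma ord3_cases (i : 'I_3) : [\/ i = o0, i = o1 | i = o2].
Proof.
case: i => [[|[|[|]]] h] //.
- by constructor 1; apply: val_inj.
- by constructor 2; apply: val_inj.
- by constructor 3; apply: val_inj.
Qed.

Lemma big3 (R : Type) (idx : R) (op : Monoid.law idx) (F : 'I_3 -> R) :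
  \big[op/idx]_(i < 3) F i = op (F o0) (op (F o1) (F o2)).
Proof.
rewrite !big_ord_recl big_ord0 Monoid.mulm1; congr (op (F _) (op (F _) (F _))); by apply: val_inj.
Qed.

Lemma digits (N a b c d : nat) : (a < N)%N -> (c < N)%N ->
  (a + N * b = c + N * d)%N -> a = c /\ b = d.
Proof.
move=> ha hc h.
have N0 : (0 < N)%N by apply: leq_ltn_trans ha.
have h1 := congr1 (modn^~ N) h; rewrite /= !(addnC _ (N * _)%N) !(mulnC N) in h1.
rewrite !modnMDl !modn_small // in h1.
split => //.
have h2 := congr1 (divn^~ N) h; rewrite /= !(addnC _ (N * _)%N) !(mulnC N) in h2.
by rewrite !divnMDl // !divn_small // !addn0 in h2.
Qed.

Lemma mdeg3 (m : 'X_{1..3}) : mdeg m = (m o0 + (m o1 + m o2))%N.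
Proof. by rewrite mdegE big3. Qed.

Lemma mpoly_vanish (L : closedFieldType) (p : {mpoly L[3]}) :
  (forall x, p.@[x] = 0) -> p = 0.
Proof.
move=> hp.
set N := msize p.
pose e (m : 'X_{1..3}) := (m o0 + N * (m o1 + N * m o2))%N.
pose V := fun i : 'I_3 => ('X^(N ^ i) : {poly L}).
have hr : restr p V = \sum_(m <- msupp p) p@_m *: 'X^(e m).
  rewrite /restr mevalE (perm_big _ (msupp_map_mpoly _ (@polyC_inj L))).
  apply: eq_bigr => m _; rewrite mcoeff_map_mpoly mul_polyC; congr (_ *: _).
  rewrite big3 /= /V -!exprM -!exprD /e; congr (_ ^+ _).
  rewrite /o0 /o1 /o2 /= expn0 expn1 !expnS expn0; nia.
have r0 : restr p V = 0.
  by apply: poly_vanish => t; rewrite restr_eval hp.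
have lt (m : 'X_{1..3}) i : m \in msupp p -> (m i < N)%N.
  move/msize_mdeg_lt; rewrite mdeg3 -/N.
  by case: (ord3_cases i) => ->; lia.
have einj m m' : m \in msupp p -> m' \in msupp p -> e m = e m' -> m = m'.
  move=> hm hm' he.
  have [h0 h12] := digits (lt _ o0 hm) (lt _ o0 hm') he.
  have [h1 h2] := digits (lt _ o1 hm) (lt _ o1 hm') h12.
  by apply/mnmP => i; case: (ord3_cases i) => ->.
apply/mpolyP => m0; rewrite mcoeff0.
case: (boolP (m0 \in msupp p)) => hm0; last by apply/eqP; rewrite mcoeff_eq0.
have := congr1 (fun q : {poly L} => q`_(e m0)) r0.
rewrite /= hr coef0 coef_sum (bigD1_seq m0) ?msupp_uniq //= coefZ coefXn eqxx mulr1.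
rewrite big1_seq ?addr0 // => m /andP [hne hm].
rewrite coefZ coefXn; case: eqP => [h|]; last by rewrite mulr0.
by move: hne; rewrite (einj _ _ hm0 hm h) eqxx.
Qed.

Section Lin.
Variable L : fieldType.
Implicit Types (a x : 'I_3 -> L).

Definition dot a x := \sum_i a i * x i.
Definition lin a : {mpoly L[3]} := \sum_i a i *: 'X_i.
Definition upd x (k : 'I_3) (t : L) := fun i => if i == k then t else x i.

Lemma lin_eval a x : (lin a).@[x] = dot a x.
Proof.
rewrite /lin /dot raddf_sum /=; apply: eq_bigr => i _.
by rewrite mevalZ mevalXU.
Qed.

Lemma lin_homog a : lin a \is 1.-homog.
Proof.
apply: rpred_sum => i _; apply: rpredZ.
by rewrite dhomogX; apply/eqP; exact: mdeg1.
Qed.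

Lemma lin_coef a i : (lin a)@_U_(i) = a i.
Proof.
rewrite /lin raddf_sum /= (bigD1 i) //= mcoeffZ mcoeffX eqxx mulr1.
rewrite big1 ?addr0 // => j hj; rewrite mcoeffZ mcoeffX.
case: eqP => [/(congr1 (fun m : 'X_{1..3} => m i))|]; last by rewrite mulr0.
by rewrite !mnm1E eqxx => /eqP; rewrite eqb1 (negbTE hj).
Qed.

Lemma homog1_lin (Q : {mpoly L[3]}) : Q \is 1.-homog ->
  Q = lin (fun i => Q@_U_(i)).
Proof.
move=> /dhomogP hQ; apply/mpolyP => m.
case: (boolP (m \in msupp Q)) => hm.
  have /eqP/mdeg1P [i /eqP hi] := hQ m hm; subst m.
  by rewrite lin_coef.
have -> : Q@_m = 0 by apply/eqP; rewrite mcoeff_eq0.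
rewrite /lin raddf_sum /= big1 // => i _; rewrite mcoeffZ mcoeffX.
case: eqP => [hi|]; last by rewrite mulr0.
by move: hm; rewrite -hi mcoeff_msupp negbK => /eqP ->; rewrite mul0r.
Qed.

Lemma lin_neq0 a : lin a != 0 -> exists k, a k != 0.
Proof.
move=> h; apply/existsP; apply: contraNT h; rewrite negb_exists => /forallP h.
apply/eqP; rewrite /lin big1 // => i _; by rewrite (eqP (negPn (h i))) scale0r.
Qed.

Lemma dot_upd a x k t : dot a (upd x k t) = dot a x + a k * (t - x k).
Proof.
rewrite /dot (bigD1 k) //= [X in _ = X + _](bigD1 k) //= /upd eqxx.
have -> : \sum_(i < 3 | i != k) a i * (if i == k then t else x i) =
          \sum_(i < 3 | i != k) a i * x i.
  by apply: eq_bigr => i /negbTE ->.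
by ring.
Qed.

Definition free (k : 'I_3) (S : {mpoly L[3]}) := forall x t, S.@[x] = S.@[upd x k t].

Lemma free_mul k S1 S2 : free k S1 -> free k S2 -> free k (S1 * S2).
Proof. by move=> h1 h2 x t; rewrite !mevalM -h1 -h2. Qed.
Lemma free_add k S1 S2 : free k S1 -> free k S2 -> free k (S1 + S2).
Proof. by move=> h1 h2 x t; rewrite !mevalD -h1 -h2. Qed.
Lemma free_scale k c S1 : free k S1 -> free k (c *: S1).
Proof. by move=> h1 x t; rewrite !mevalZ -h1. Qed.
Lemma free_C k c : free k c%:MP.
Proof. by move=> x t; rewrite !mevalC. Qed.

Definition decomp a k (Q : {mpoly L[3]}) :=
  exists R S, Q = lin a * R + S /\ free k S.

Lemma decompM a k P1 P2 : decomp a k P1 -> decomp a k P2 -> decomp a k (P1 * P2).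
Proof.
move=> [R1 [S1 [-> f1]]] [R2 [S2 [-> f2]]].
exists (R1 * (lin a * R2 + S2) + S1 * R2), (S1 * S2); split; last exact: free_mul.
by ring.
Qed.

Lemma decomp_all a k (Q : {mpoly L[3]}) : a k != 0 -> decomp a k Q.
Proof.
move=> ak.
have hX i : decomp a k 'X_i.
  case: (eqVneq i k) => [->|ne].
    exists (a k)^-1%:MP, ('X_k - (a k)^-1 *: lin a); split.
      by rewrite [lin a * _]mulrC mul_mpolyC addrC subrK.
    move=> x t; rewrite !mevalB !mevalZ !mevalXU !lin_eval dot_upd /upd eqxx.
    by field.
  exists 0, 'X_i; split; first by rewrite mulr0 add0r.
  by move=> x t; rewrite !mevalXU /upd (negbTE ne).
have h1 : decomp a k 1 by exists 0, 1; split; [rewrite mulr0 add0r| exact: (free_C k 1)].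
elim/mpolyind: Q => [|c m p _ _ [R [S [-> fS]]]].
  by exists 0, 0; split; [rewrite mulr0 add0r| exact: (free_C k 0)].
have [R' [S' [hm fm]]] : decomp a k 'X_[m].
  rewrite mpolyXE_id; apply: (big_ind (decomp a k)) => //; first exact: decompM.
  move=> i _; elim: (m i) => [|e IH]; first by rewrite expr0.
  by rewrite exprS; apply: decompM.
exists (c *: R' + R), (c *: S' + S); split; last by apply: free_add => //; apply: free_scale.
by rewrite hm scalerDr mulrDr -scalerAr addrACA.
Qed.

End Lin.

Lemma div_lin (L : closedFieldType) (a : 'I_3 -> L) (k : 'I_3) (Q : {mpoly L[3]}) :
  a k != 0 -> (forall x, dot a x = 0 -> Q.@[x] = 0) -> exists R, Q = lin a * R.
Proof.
move=> ak hQ; have [R [S [hd fS]]] := decomp_all Q ak.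
exists R; suff S0 : S = 0 by rewrite hd S0 addr0.
apply: mpoly_vanish => x.
pose t := x k - dot a x / a k.
have h0 : dot a (upd x k t) = 0 by rewrite dot_upd /t; field.
rewrite (fS x t); have := hQ _ h0; rewrite hd mevalD mevalM lin_eval h0 mul0r add0r.
done.
Qed.

Lemma pihomog_lin_mul (L : fieldType) (l R : {mpoly L[3]}) (d : nat) :
  l \is 1.-homog -> pihomog mdeg d.+1 (l * R) = l * pihomog mdeg d R.
Proof.
move=> hl.
set K := maxn (msize R) d.+1.
rewrite {1}(pihomog_partitionE (k := K) (p := R) (leq_maxl _ _)) mulr_sumr linear_sum /=.
have dK : (d < K)%N by rewrite leq_maxr.
rewrite (bigD1 (Ordinal dK)) //= big1 ?addr0.
  by rewrite pihomog_dE //; apply: (dhomogM hl); apply: pihomogP.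
move=> j hj; apply: (pihomog_ne0 (d := (1 + j)%N)).
  by apply: contra hj => /eqP [] hj'; apply/eqP; apply: val_inj.
by apply: (dhomogM hl); apply: pihomogP.
Qed.

Lemma msize_homog (L : fieldType) (p : {mpoly L[3]}) d :
  p != 0 -> p \is d.-homog -> msize p = d.+1.
Proof.
move=> p0 /dhomogP hp; rewrite -(mlead_deg p0); congr _.+1.
exact: hp (mlead_supp p0).
Qed.

Lemma msize_homog_le (L : fieldType) (p : {mpoly L[3]}) d :
  p \is d.-homog -> (msize p <= d.+1)%N.
Proof.
case: (eqVneq p 0) => [->|p0 hp]; first by rewrite msize0.
by rewrite (msize_homog p0 hp).
Qed.

Section Geo.
Variable L : closedFieldType.
Implicit Types (u v w x y : 'I_3 -> L).

Definition cross u v : 'I_3 -> L := fun i =>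
  if i == o0 then u o1 * v o2 - u o2 * v o1
  else if i == o1 then u o2 * v o0 - u o0 * v o2
  else u o0 * v o1 - u o1 * v o0.

Lemma cross0 u v : cross u v o0 = u o1 * v o2 - u o2 * v o1. Proof. by []. Qed.
Lemma cross1 u v : cross u v o1 = u o2 * v o0 - u o0 * v o2. Proof. by []. Qed.
Lemma cross2 u v : cross u v o2 = u o0 * v o1 - u o1 * v o0. Proof. by []. Qed.

Lemma dot3 a x : dot a x = a o0 * x o0 + (a o1 * x o1 + a o2 * x o2).
Proof. by rewrite /dot big3. Qed.

Definition nzp x := exists i, x i != 0.

Lemma size_lin_poly (p q : L) : (size (p%:P + q%:P * 'X)%R <= 2)%N.
Proof.
apply: (leq_trans (size_polyD _ _)); rewrite geq_max.
apply/andP; split; first by apply: (leq_trans (size_polyC_leq1 _)).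
apply: (leq_trans (size_mul_leq _ _)); rewrite size_polyX.
by have := size_polyC_leq1 q; case: (size _) => [|[|]].
Qed.

Lemma span3 u v x (j i : 'I_3) :
  cross u v j * x i = cross x v j * u i + cross u x j * v i
     + (if i == j then dot (cross u v) x else 0).
Proof.
rewrite dot3.
by case: (ord3_cases j) => ->; case: (ord3_cases i) => ->;
  rewrite ?cross0 ?cross1 ?cross2 /=; ring.
Qed.

Lemma span3' u v x (j i : 'I_3) : dot (cross u v) x = 0 ->
  cross u v j * x i = cross x v j * u i + cross u x j * v i.
Proof. by move=> h; rewrite span3 h; case: (i == j); rewrite addr0. Qed.

Lemma dot_cross_l u v : dot (cross u v) u = 0.
Proof. by rewrite dot3 cross0 cross1 cross2; ring. Qed.
Lemma dot_cross_r u v : dot (cross u v) v = 0.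
Proof. by rewrite dot3 cross0 cross1 cross2; ring. Qed.

Lemma cross_nz u v : nzp u -> nzp v -> ~ proj_eq u v -> nzp (cross u v).
Proof.
move=> [k uk] [l vl] np.
case: (boolP [exists i, cross u v i != 0]) => [/existsP [i hi]|]; first by exists i.
rewrite negb_exists => /forallP hc; exfalso.
have hc' i : cross u v i = 0 by apply/eqP; rewrite -[_ == 0]negbK hc.
have minor i i' : u i * v i' = u i' * v i.
  have h0 := hc' o0; have h1 := hc' o1; have h2 := hc' o2.
  rewrite ?cross0 ?cross1 ?cross2 in h0 h1 h2.
  apply/eqP; rewrite -subr_eq0; apply/eqP.
  case: (ord3_cases i) => ->; case: (ord3_cases i') => ->;
    rewrite ?subrr //;
    by [rewrite h0|rewrite h1|rewrite h2|rewrite -opprB h0 oppr0|rewrite -opprB h1 oppr0|rewrite -opprB h2 oppr0].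
apply: np; exists (v k / u k).
  apply/negP => /eqP h.
  have vk0 : v k = 0.
    by move/eqP: h; rewrite mulf_eq0 invr_eq0 (negbTE uk) orbF => /eqP.
  have := minor k l; rewrite vk0 mulr0 => /eqP; rewrite mulf_eq0 (negbTE uk) /=.
  by rewrite (negbTE vl).
move=> i; rewrite -{1}(mulKf uk (v i)) minor; field; exact: uk.
Qed.


Lemma plane (Q : {mpoly L[3]}) (d : nat) u v (xs : 'I_d.+1 -> 'I_3 -> L) :
  Q \is d.-homog ->
  nzp (cross u v) ->
  (forall k, nzp (xs k)) ->
  (forall k l, k != l -> ~ proj_eq (xs k) (xs l)) ->
  (forall k, dot (cross u v) (xs k) = 0) ->
  (forall k, Q.@[xs k] = 0) ->
  forall x, dot (cross u v) x = 0 -> Q.@[x] = 0.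
Proof.
move=> hQ [j wj] nzx npx onx Qx.
set w := cross u v in wj onx *.
pose al y := cross y v j / w j.
pose be y := cross u y j / w j.
have decomp y : dot w y = 0 -> forall i, y i = al y * u i + be y * v i.
  move=> hy i; apply: (mulfI wj); rewrite (span3' _ _ hy) /al /be; field; exact: wj.
have [c hc] := avoid_seq [seq al (xs k) / be (xs k) | k <- enum 'I_d.+1].
pose v' i := v i + c * u i.
pose a y := al y - c * be y.
have decomp' y : dot w y = 0 -> forall i, y i = a y * u i + be y * v' i.
  by move=> hy i; rewrite (decomp y hy i) /a /v'; ring.
have ak k : a (xs k) != 0.
  apply/negP => /eqP h0.
  case: (eqVneq (be (xs k)) 0) => hb.
    have hal : al (xs k) = 0 by move: h0; rewrite /a hb mulr0 subr0.
    have [i hi] := nzx k; move: hi; rewrite (decomp _ (onx k) i) hal hb.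
    by rewrite !mul0r addr0 eqxx.
  move: hc; rewrite (_ : c = al (xs k) / be (xs k)).
    by rewrite (map_f (fun k => al (xs k) / be (xs k))) // mem_enum.
  by move: h0; rewrite /a => /eqP; rewrite subr_eq0 => /eqP ->; field.
pose t k := be (xs k) / a (xs k).
pose g := restr Q (fun i => (u i)%:P + (v' i)%:P * 'X).
have gt (s : L) : g.[s] = Q.@[fun i => u i + v' i * s].
  by rewrite restr_eval; apply: meval_eq => i; rewrite !hornerE.
have g_root k : g.[t k] = 0.
  have : Q.@[xs k] = (a (xs k))^+d * Q.@[fun i => u i + v' i * t k].
    rewrite -meval_homog //; apply: meval_eq => i; rewrite (decomp' _ (onx k) i) /t.
    by field; exact: ak.
  rewrite Qx gt => /esym/eqP; rewrite mulf_eq0 expf_eq0 (negbTE (ak k)) andbF /=.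
  by move/eqP.
have tinj : injective t.
  move=> k l htk; apply/eqP; apply: contraT => kl; case: (npx _ _ kl).
  exists (a (xs l) / a (xs k)).
    by rewrite mulf_neq0 ?invr_eq0 ?ak.
  move=> i; rewrite (decomp' _ (onx l) i) (decomp' _ (onx k) i).
  have : be (xs l) = t k * a (xs l) by rewrite htk /t mulfVK ?ak.
  move=> ->; rewrite /t; field; exact: ak.
have g0 : g = 0.
  apply/eqP; apply: contraT => gn0.
  have hs : (size g <= d.+1)%N.
    apply: leq_trans (msize_homog_le hQ); apply: restr_size => i; exact: size_lin_poly.
  have hr : all (root g) [seq t k | k <- enum 'I_d.+1].
    by apply/allP => s /mapP [k _ ->]; rewrite /root g_root.
  have hu : uniq [seq t k | k <- enum 'I_d.+1] by rewrite map_inj_uniq ?enum_uniq.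
  have := max_poly_roots gn0 hr hu.
  by rewrite size_map size_enum_ord ltnNge hs.
have line s : Q.@[fun i => u i + v' i * s] = 0 by rewrite -gt g0 horner0.
have Qv' : Q.@[v'] = 0.
  pose h := restr Q (fun i => (v' i)%:P + (u i)%:P * 'X).
  have hX : h * 'X = 0.
    apply: poly_vanish => s; rewrite hornerMX restr_eval.
    case: (eqVneq s 0) => [->|s0]; first by rewrite mulr0.
    have : Q.@[fun i => ((v' i)%:P + (u i)%:P * 'X).[s]]
           = s^+d * Q.@[fun i => u i + v' i * s^-1].
      rewrite -meval_homog //; apply: meval_eq => i; rewrite !hornerE; field; exact: s0.
    by rewrite line mulr0 => ->; rewrite mul0r.
  have h0 : h = 0 by move/eqP: hX; rewrite mulf_eq0 polyX_eq0 orbF => /eqP.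
  have := congr1 (horner^~ 0) h0; rewrite /= horner0 restr_eval => <-.
  by apply: meval_eq => i; rewrite !hornerE.
move=> x hx.
case: (eqVneq (a x) 0) => ax.
  have -> : Q.@[x] = (be x)^+d * Q.@[v'].
    rewrite -meval_homog //; apply: meval_eq => i; by rewrite (decomp' _ hx i) ax mul0r add0r.
  by rewrite Qv' mulr0.
have -> : Q.@[x] = (a x)^+d * Q.@[fun i => u i + v' i * (be x / a x)].
  rewrite -meval_homog //; apply: meval_eq => i; rewrite (decomp' _ hx i); field; exact: ax.
by rewrite line mulr0.
Qed.

End Geo.

Section Geo2.
Variable L : closedFieldType.
Implicit Types (a u v w x y z : 'I_3 -> L).

Lemma line_factor (Q : {mpoly L[3]}) (d : nat) u v (xs : 'I_d.+2 -> 'I_3 -> L) :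
  Q \is d.+1.-homog ->
  nzp (cross u v) ->
  (forall k, nzp (xs k)) ->
  (forall k l, k != l -> ~ proj_eq (xs k) (xs l)) ->
  (forall k, dot (cross u v) (xs k) = 0) ->
  (forall k, Q.@[xs k] = 0) ->
  exists R, R \is d.-homog /\ Q = lin (cross u v) * R.
Proof.
move=> hQ hw nzx npx onx Qx.
have hv := plane hQ hw nzx npx onx Qx.
have [j wj] := hw.
have [R hR] := div_lin wj hv.
exists (pihomog mdeg d R); split; first exact: pihomogP.
by rewrite -pihomog_lin_mul ?lin_homog // -hR pihomog_dE.
Qed.

Lemma line2 a u v x (k : 'I_3) : a k != 0 -> dot a u = 0 -> dot a v = 0 ->
  dot a x = 0 -> dot (cross u v) x = 0.
Proof.
move=> ak hu hv hx.
have E : a k * dot (cross u v) x = cross u v k * dot a x + dot a v * cross x u k - dot a u * cross x v k.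
  rewrite !dot3; by case: (ord3_cases k) => ->; rewrite ?cross0 ?cross1 ?cross2; ring.
by move: E; rewrite hu hv hx !mulr0 !mul0r ?addr0 ?subr0 => /eqP; rewrite mulf_eq0 (negbTE ak) => /eqP.
Qed.

Lemma cross_propeq x y : proj_eq x y -> forall i, cross x y i = 0.
Proof.
move=> [c _ h] i; rewrite /cross !h.
by case: (ord3_cases i) => ->; rewrite /= ; ring.
Qed.

Lemma cross_np x y : nzp (cross x y) -> ~ proj_eq x y.
Proof. by move=> [i hi] /cross_propeq h; move: hi; rewrite h eqxx. Qed.

Lemma cross_nzl x y : nzp (cross x y) -> nzp x.
Proof.
move=> [i hi]; case: (boolP [exists j, x j != 0]) => [/existsP [j hj]|]; first by exists j.
rewrite negb_exists => /forallP h.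
have h0 j : x j = 0 by apply/eqP; rewrite -[_ == 0]negbK h.
by move: hi; rewrite /cross !h0 !mul0r subrr; case: ifP => _; [|case: ifP => _]; rewrite eqxx.
Qed.

Lemma cross_lin x y (c1 c2 c3 c4 : L) (i : 'I_3) :
  cross (fun j => c1 * x j + c2 * y j) (fun j => c3 * x j + c4 * y j) i
  = (c1 * c4 - c2 * c3) * cross x y i.
Proof. by rewrite /cross; case: (ord3_cases i) => ->; rewrite /=; ring. Qed.

Lemma dot_lin a x y (c1 c2 : L) : dot a (fun j => c1 * x j + c2 * y j) = c1 * dot a x + c2 * dot a y.
Proof. by rewrite !dot3; ring. Qed.

Lemma lin_nz a : nzp a -> lin a != 0.
Proof.
move=> [i hi]; apply/eqP => h; move: hi; by rewrite -(lin_coef a i) h mcoeff0 eqxx.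
Qed.

Lemma msize_lin a : nzp a -> msize (lin a) = 2.
Proof. by move=> h; rewrite (msize_homog (lin_nz h) (lin_homog a)). Qed.

End Geo2.

Ltac breakneq := repeat match goal with H : is_true (_ && _) |- _ => case/andP: H => ? ? end.
Ltac uniq_sub u := move: (u); rewrite /= ?inE ?negb_or ?andbT => ?; breakneq;
  repeat (apply/andP; split); try done; by rewrite eq_sym.

Section Config.
Variable L : closedFieldType.
Implicit Types (a u v w x y z : 'I_3 -> L).

Definition comb u v (al be : L) : 'I_3 -> L := fun t => al * u t + be * v t.

Lemma comb_factor (Q : {mpoly L[3]}) (d : nat) u v (al be : 'I_d.+2 -> L) :
  Q \is d.+1.-homog -> nzp (cross u v) ->
  (forall k l, k != l -> al k * be l - be k * al l != 0) ->
  (forall k, Q.@[comb u v (al k) (be k)] = 0) ->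
  exists R, R \is d.-homog /\ Q = lin (cross u v) * R.
Proof.
move=> hQ huv hdet hx.
have cr k l : k != l -> nzp (cross (comb u v (al k) (be k)) (comb u v (al l) (be l))).
  move=> kl; have [j hj] := huv; exists j; rewrite /comb cross_lin.
  by rewrite mulf_neq0 // hdet.
have partner (k : 'I_d.+2) : exists l, k != l.
  case: (eqVneq k ord0) => [->|h]; last by exists ord0.
  by exists ord_max; rewrite -val_eqE.
apply: (line_factor (xs := fun k => comb u v (al k) (be k))) => //.
- by move=> k; have [l kl] := partner k; apply: cross_nzl (cr _ _ kl).
- by move=> k l kl; apply: cross_np; apply: cr.
- by move=> k; rewrite /comb dot_lin dot_cross_l dot_cross_r !mulr0 addr0.
Qed.

Lemma dot_ej a (j : 'I_3) : dot a (fun i => (i == j)%:R) = a j.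
Proof.
by rewrite dot3; case: (ord3_cases j) => ->; rewrite /= ?mulr0 ?mulr1 ?addr0 ?add0r.
Qed.

Lemma triple1 x y e : dot (cross y e) x = dot (cross x y) e.
Proof. by rewrite !dot3 !cross0 !cross1 !cross2; ring. Qed.
Lemma triple2 x y e : dot (cross e x) y = dot (cross x y) e.
Proof. by rewrite !dot3 !cross0 !cross1 !cross2; ring. Qed.

Variable b : 'I_7 -> 'I_3 -> L.
Hypothesis hnz : forall i, nzp (b i).
Hypothesis hdist : forall i j, proj_eq (b i) (b j) -> i = j.

Lemma bcross i j : i != j -> nzp (cross (b i) (b j)).
Proof. by move=> ij; apply: cross_nz => // /hdist h; move: ij; rewrite h eqxx. Qed.

Lemma part1_core (P : {mpoly L[3]}) (i0 i1 i2 i3 : 'I_7) :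
  uniq [:: i0; i1; i2; i3] ->
  P \is 3.-homog -> (forall i, P.@[b i] = 0) ->
  (exists a, [/\ nzp a, dot a (b i0) = 0, dot a (b i1) = 0 & dot a (b i2) = 0]) ->
  (exists a, [/\ nzp a, dot a (b i0) = 0, dot a (b i1) = 0 & dot a (b i3) = 0]) ->
  exists R, R \is 2.-homog /\ P = lin (cross (b i0) (b i1)) * R.
Proof.
move=> u hP Pb [a2 [[k2 hk2] a20 a21 a22]] [a3 [[k3 hk3] a30 a31 a33]].
have i01 : i0 != i1 by move: u; rewrite /= !inE; case: (i0 == i1).
have h2 := line2 hk2 a20 a21 a22.
have h3 := line2 hk3 a30 a31 a33.
pose s := [:: i0; i1; i2; i3].
apply: (line_factor (xs := fun k : 'I_4 => b (nth i0 s k))) => //.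
- exact: bcross.
- move=> k l kl /hdist /eqP; rewrite nth_uniq ?size_tuple //.
  by apply/negP.
- case=> [[|[|[|[|]]]] ?] //=.
  + exact: dot_cross_l.
  + exact: dot_cross_r.
Qed.

Definition NC := forall (i j k : 'I_7) a, uniq [:: i; j; k] -> nzp a ->
  dot a (b i) = 0 -> dot a (b j) = 0 -> dot a (b k) = 0 -> False.

Hypothesis hNC : NC.

Lemma NC_dot (i j k : 'I_7) : uniq [:: i; j; k] -> dot (cross (b i) (b j)) (b k) != 0.
Proof.
move=> u; apply/negP => /eqP h.
have ij : i != j by move: u; rewrite /= !inE; case: (i == j).
by apply: (hNC u (bcross ij)) => //; [apply: dot_cross_l|apply: dot_cross_r].
Qed.

Lemma CL (D : {mpoly L[3]}) (i j k1 k2 k3 : 'I_7) (c : L) :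
  uniq [:: i; j; k1; k2; k3] -> c != 0 -> D \is 2.-homog ->
  D.@[b i] = 0 -> D.@[b j] = 0 -> D.@[comb (b i) (b j) 1 c] = 0 ->
  D.@[b k1] = 0 -> D.@[b k2] = 0 -> D.@[b k3] = 0 -> D = 0.
Proof.
move=> u c0 hD Di Dj Dp D1 D2 D3.
have ij : i != j by move: u; rewrite /= !inE; case: (i == j).
pose al := fun k : 'I_3 => nth (0 : L) [:: 1; 0; 1] k.
pose be := fun k : 'I_3 => nth (0 : L) [:: 0; 1; c] k.
have [n [hn hDn]] : exists R, R \is 1.-homog /\ D = lin (cross (b i) (b j)) * R.
  apply: (comb_factor (al := al) (be := be)) => //; first exact: bcross.
  - move=> k l; case: k => [[|[|[|]]] ?]; case: l => [[|[|[|]]] ?] //= _;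
      rewrite ?mul0r ?mulr0 ?mul1r ?mulr1 ?subr0 ?sub0r ?oppr_eq0 ?oner_eq0 //.
  - case=> [[|[|[|]]] ?] //=.
    + by rewrite -[RHS]Di; apply: meval_eq => t; rewrite /comb mul1r mul0r addr0.
    + by rewrite -[RHS]Dj; apply: meval_eq => t; rewrite /comb mul1r mul0r add0r.
have nk k : uniq [:: i; j; k] -> (lin (cross (b i) (b j)) * n).@[b k] = 0 -> n.@[b k] = 0.
  move=> uk; rewrite mevalM lin_eval => /eqP; rewrite mulf_eq0 (negbTE (NC_dot uk)) /=.
  by move/eqP.
rewrite hDn in D1 D2 D3 *.
have n1 := nk k1 ltac:(uniq_sub u) D1.
have n2 := nk k2 ltac:(uniq_sub u) D2.
have n3 := nk k3 ltac:(uniq_sub u) D3.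
case: (eqVneq n 0) => [->|n0]; first by rewrite mulr0.
exfalso.
have hl := homog1_lin hn.
set a := fun t => n@_U_(t) in hl.
have [k hk] : exists k, a k != 0 by apply: lin_neq0; rewrite -hl.
have da k' : dot a (b k') = n.@[b k'] by rewrite -lin_eval -hl.
apply: (hNC (i := k1) (j := k2) (k := k3) (a := a)); first by uniq_sub u.
- by exists k.
- by rewrite da.
- by rewrite da.
- by rewrite da.
Qed.

Lemma UC (C D : {mpoly L[3]}) (k1 k2 k3 k4 k5 : 'I_7) :
  uniq [:: k1; k2; k3; k4; k5] -> C \is 2.-homog -> C != 0 -> D \is 2.-homog ->
  (forall k, k \in [:: k1; k2; k3; k4; k5] -> C.@[b k] = 0) ->
  (forall k, k \in [:: k1; k2; k3; k4; k5] -> D.@[b k] = 0) ->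
  exists kap, D = kap *: C.
Proof.
move=> u hC C0 hD Cb Db.
have m1 : k1 \in [:: k1; k2; k3; k4; k5] by rewrite !inE eqxx.
have m2 : k2 \in [:: k1; k2; k3; k4; k5] by rewrite !inE eqxx ?orbT.
have m3 : k3 \in [:: k1; k2; k3; k4; k5] by rewrite !inE eqxx ?orbT.
have m4 : k4 \in [:: k1; k2; k3; k4; k5] by rewrite !inE eqxx ?orbT.
have m5 : k5 \in [:: k1; k2; k3; k4; k5] by rewrite !inE eqxx ?orbT.
pose p := comb (b k1) (b k2) 1 1.
have mu0 : C.@[p] != 0.
  apply/negP => /eqP h; move/negP: C0; apply; apply/eqP.
  by apply: (CL u (oner_neq0 L) hC (Cb _ m1) (Cb _ m2) h (Cb _ m3) (Cb _ m4) (Cb _ m5)).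
have hD' : C.@[p] *: D - D.@[p] *: C = 0.
  have ev k : k \in [:: k1; k2; k3; k4; k5] -> (C.@[p] *: D - D.@[p] *: C).@[b k] = 0.
    by move=> hk; rewrite mevalB !mevalZ (Cb _ hk) (Db _ hk) !mulr0 subr0.
  apply: (CL u (oner_neq0 L) _ (ev _ m1) (ev _ m2) _ (ev _ m3) (ev _ m4) (ev _ m5)).
    by apply: rpredB; apply: rpredZ.
  by rewrite mevalB !mevalZ mulrC subrr.
exists (D.@[p] / C.@[p]).
have h : C.@[p] *: D = D.@[p] *: C by apply/eqP; rewrite -subr_eq0 hD'.
apply: (scalerI mu0); rewrite h scalerA; congr (_ *: _); field; exact: mu0.
Qed.

Lemma comb10 (Q : {mpoly L[3]}) x y : Q.@[comb x y 1 0] = Q.@[x].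
Proof. by apply: meval_eq => t; rewrite /comb mul1r mul0r addr0. Qed.
Lemma comb01 (Q : {mpoly L[3]}) x y : Q.@[comb x y 0 1] = Q.@[y].
Proof. by apply: meval_eq => t; rewrite /comb mul1r mul0r add0r. Qed.

Definition q0 : 'I_7 := @Ordinal 7 0 isT.
Definition q1 : 'I_7 := @Ordinal 7 1 isT.
Definition q2 : 'I_7 := @Ordinal 7 2 isT.
Definition q3 : 'I_7 := @Ordinal 7 3 isT.
Definition q4 : 'I_7 := @Ordinal 7 4 isT.
Definition q5 : 'I_7 := @Ordinal 7 5 isT.
Definition q6 : 'I_7 := @Ordinal 7 6 isT.

Lemma FS (P C : {mpoly L[3]}) : P \is 3.-homog -> C \is 2.-homog -> C != 0 ->
  (forall i, P.@[b i] = 0) -> (forall i, C.@[b i] = 0) -> exists m, P = C * m.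
Proof.
move=> hP hC C0 Pb Cb.
set w := cross (b q0) (b q1).
have hw : nzp w by apply: bcross.
have [c2 hc2] := avoid_seq [:: (0 : L); 1].
move: hc2; rewrite !inE negb_or => /andP [c20 c21].
pose p1 := comb (b q0) (b q1) 1 1.
pose p2 := comb (b q0) (b q1) 1 c2.
have C1 : C.@[p1] != 0.
  apply/negP => /eqP h; move/negP: C0; apply; apply/eqP.
  have u : uniq [:: q0; q1; q2; q3; q4] by [].
  exact: (CL u (oner_neq0 L) hC (Cb _) (Cb _) h (Cb _) (Cb _) (Cb _)).
have C2 : C.@[p2] != 0.
  apply/negP => /eqP h; move/negP: C0; apply; apply/eqP.
  have u : uniq [:: q0; q1; q2; q3; q4] by [].
  exact: (CL u c20 hC (Cb _) (Cb _) h (Cb _) (Cb _) (Cb _)).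
set e := cross p1 p2.
have [j ej] : nzp e.
  have [j wj] := hw; exists j; rewrite /e /p1 /p2 /comb cross_lin mulf_neq0 //.
  by rewrite !mul1r subr_eq0.
pose ev := fun i : 'I_3 => ((i == j)%:R : L).
pose g1 := P.@[p1] / C.@[p1].
pose g2 := P.@[p2] / C.@[p2].
pose z := fun t => (g1 * cross p2 ev t + g2 * cross ev p1 t) / e j.
have dotz x : dot z x = (g1 * dot (cross p2 ev) x + g2 * dot (cross ev p1) x) / e j.
  by rewrite /z !dot3; field; exact: ej.
have dz1 : dot z p1 = g1.
  rewrite dotz triple1 /ev dot_ej dot_cross_r -/e; field; exact: ej.
have dz2 : dot z p2 = g2.
  rewrite dotz dot_cross_l triple2 /ev dot_ej -/e; field; exact: ej.
pose E := P - C * lin z.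
have hE : E \is 3.-homog by apply: rpredB => //; apply: (dhomogM hC (lin_homog z)).
pose al := fun k : 'I_4 => nth (0 : L) [:: 1; 0; 1; 1] k.
pose be := fun k : 'I_4 => nth (0 : L) [:: 0; 1; 1; c2] k.
have [Q2 [hQ2 hEQ]] : exists R, R \is 2.-homog /\ E = lin w * R.
  apply: (comb_factor (al := al) (be := be)) => //.
  - move=> k l; case: k => [[|[|[|[|]]]] ?]; case: l => [[|[|[|[|]]]] ?] //= _;
      rewrite ?mul0r ?mulr0 ?mul1r ?mulr1 ?subr0 ?sub0r ?oppr_eq0 ?oner_eq0 //.
    + by rewrite subr_eq0.
    + by rewrite subr_eq0 eq_sym.
  - case=> [[|[|[|[|]]]] ?] //=; rewrite /E mevalB mevalM lin_eval.
    + by rewrite !comb10 Pb Cb mul0r subr0.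
    + by rewrite !comb01 Pb Cb mul0r subr0.
    + by rewrite -/p1 dz1 /g1; field; exact: C1.
    + by rewrite -/p2 dz2 /g2; field; exact: C2.
have Q2b k : k \in [:: q2; q3; q4; q5; q6] -> Q2.@[b k] = 0.
  move=> hk.
  have u : uniq [:: q0; q1; k] by move: hk; rewrite !inE => /orP [/eqP -> //|/orP [/eqP -> //|/orP [/eqP -> //|/orP [/eqP -> //| /eqP -> //]]]].
  have := Pb k; have := Cb k.
  rewrite (_ : P = E + C * lin z); last by rewrite /E subrK.
  rewrite hEQ mevalD !mevalM lin_eval => ->; rewrite mul0r addr0 => /eqP.
  by rewrite mulf_eq0 (negbTE (NC_dot u)) /= => /eqP.
have [kap hkap] := UC (isT : uniq [:: q2; q3; q4; q5; q6]) hC C0 hQ2 (fun k _ => Cb k) Q2b.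
exists (lin z + kap *: lin w).
rewrite (_ : P = E + C * lin z); last by rewrite /E subrK.
by rewrite hEQ hkap -!mul_mpolyC; ring.
Qed.

End Config.

Section Group.
Local Open Scope group_scope.

Lemma fix_parity (p : 'S_7) (B : {set 'I_7}) : (1 < #|~: B|)%N ->
  exists2 p' : 'S_7, p' \in Alt7 & forall x, p x \in B -> p' x = p x.
Proof.
move=> hB; case: (boolP (odd_perm p)) => hp; last first.
  by exists p => //; rewrite /Alt7 Alt_even.
have [a [c [ha hc ac]]] := card_gt1P hB.
exists (p * tperm a c).
  by rewrite /Alt7 Alt_even odd_permM odd_tperm ac hp.
move=> x hx; rewrite permM tpermD //.
- by apply: contraTneq hx => <-; rewrite -in_setC.
- by apply: contraTneq hx => <-; rewrite -in_setC.
Qed.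

Lemma G3 (f g : 'I_3 -> 'I_7) : injective f -> injective g ->
  exists2 pi : 'S_7, pi \in Alt7 & forall i, pi (f i) = g i.
Proof.
move=> fi gi.
pose s1 := tperm (f o0) (g o0).
pose s2 := tperm (s1 (f o1)) (g o1).
pose s3 := tperm (s2 (s1 (f o2))) (g o2).
pose p := s1 * s2 * s3.
have ne (h : 'I_3 -> 'I_7) x y : injective h -> x != y -> h x != h y.
  by move=> hi; apply: contraNneq => /hi ->.
have o01 : o0 != o1 by []. have o02 : o0 != o2 by []. have o12 : o1 != o2 by [].
pose f1 i := s1 (f i).
pose f2 i := s2 (f1 i).
have f1i : injective f1 by move=> x y /perm_inj /fi.
have f2i : injective f2 by move=> x y /perm_inj /f1i.
have a0 : f1 o0 = g o0 by rewrite /f1 tpermL.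
have b0 : f2 o0 = g o0.
  rewrite /f2 a0 tpermD //; last by rewrite eq_sym ne.
  by rewrite -a0 eq_sym ne.
have b1 : f2 o1 = g o1 by rewrite /f2 /s2 tpermL.
have pe i : p (f i) = s3 (f2 i) by rewrite !permM.
have e0 : p (f o0) = g o0.
  rewrite pe b0 tpermD //; last by rewrite eq_sym ne.
  by rewrite -b0 eq_sym ne.
have e1 : p (f o1) = g o1.
  rewrite pe b1 tpermD //; last by rewrite eq_sym ne.
  by rewrite -b1 eq_sym ne.
have e2 : p (f o2) = g o2 by rewrite pe tpermL.
have hB : (1 < #|~: [set g i | i in 'I_3]|)%N.
  have h1 : (#|[set g i | i in 'I_3]| <= 3)%N.
    by apply: leq_trans (leq_imset_card _ _) _; rewrite card_ord.
  have h2 := cardsC [set g i | i in 'I_3]; rewrite card_ord in h2.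
  lia.
have [p' hp' hpp'] := fix_parity p hB.
exists p' => // i.
have hgi : p (f i) \in [set g i | i in 'I_3].
  by case: (ord3_cases i) => ->; rewrite ?e0 ?e1 ?e2 imset_f.
rewrite hpp' //.
by case: (ord3_cases i) => ->.
Qed.

Lemma G6 (f : 'I_6 -> 'I_7) (r : 'I_7) : injective f ->
  exists2 pi : 'S_7, pi \in Alt7 & forall j, j != r -> exists i, pi (f i) = j.
Proof.
move=> fi.
set S := [set f i | i in 'I_6].
have cS : #|S| = 6%N by rewrite card_imset // card_ord.
have c1 : #|~: S| == 1%N.
  by have := cardsC S; rewrite cS card_ord => h; apply/eqP; lia.
have [w hw] := cards1P c1.
have hB : (1 < #|~: [set r]|)%N.
  by have := cardsC [set r]; rewrite cards1 card_ord => h; lia.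
have [p hp hpp] := fix_parity (tperm w r) hB.
exists p => // j jr.
have pw : p w = r.
  by rewrite hpp tpermL // in_set1.
have pj : p ((p^-1) j) = j by rewrite permKV.
have xw : (p^-1) j != w by apply: contra jr => /eqP h; rewrite -pj h pw.
have : (p^-1) j \in S.
  apply: contraR xw; rewrite -in_setC hw in_set1; exact.
case/imsetP => i _ hi; exists i; by rewrite -hi.
Qed.

End Group.

Lemma map_mpoly_nz (K L : fieldType) (f : {rmorphism K -> L}) (Q : {mpoly K[3]}) :
  Q != 0 -> map_mpoly f Q != 0.
Proof.
apply: contra => /eqP h; apply/eqP/mpolyP => m.
by have := congr1 (mcoeff m) h; rewrite mcoeff_map_mpoly !mcoeff0 => /eqP; rewrite fmorph_eq0 => /eqP.
Qed.

Lemma map_mpoly_homog (K L : fieldType) (f : {rmorphism K -> L}) (Q : {mpoly K[3]}) d :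
  Q \is d.-homog -> map_mpoly f Q \is d.-homog.
Proof.
move=> /dhomogP hQ; apply/dhomogP => m; rewrite mcoeff_msupp mcoeff_map_mpoly fmorph_eq0.
by rewrite -mcoeff_msupp => /hQ.
Qed.

Lemma transport (K : fieldType) (L : closedFieldType) (iota : {rmorphism K -> L})
  (b : 'I_7 -> point3 L) (pi : 'S_7) d k (f : 'I_k -> 'I_7) :
  in_image_GB iota b pi -> lie_on_curve_of_degree d (fun i => b (f i)) ->
  lie_on_curve_of_degree d (fun i => b (pi (f i))).
Proof.
move=> [s [_ hs]] [Q [Q0 hQ hv]].
have hQ' := map_mpoly_homog s hQ.
exists (map_mpoly s Q); split => //; first exact: map_mpoly_nz.
move=> i; have [c c0 hc] := hs (f i).
rewrite (meval_eq _ hc) (meval_homog _ _ hQ') /gal_act -meval_rmorph hv rmorph0 mulr0 //.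
Qed.

Lemma line_data (L : closedFieldType) (Q : {mpoly L[3]}) : Q \is 1.-homog -> Q != 0 ->
  exists a : 'I_3 -> L, nzp a /\ forall x, Q.@[x] = dot a x.
Proof.
move=> hQ Q0; have hl := homog1_lin hQ.
exists (fun i => Q@_U_(i)); split; last by move=> x; rewrite -lin_eval -hl.
by apply: lin_neq0; rewrite -hl.
Qed.

Lemma irr_contra (L : fieldType) (P G H : {mpoly L[3]}) :
  P != 0 -> msize P = 4%N -> abs_irreducible P -> P = G * H ->
  (2 <= msize G <= 3)%N -> False.
Proof.
move=> P0 sP [_ irr] hGH /andP [g2 g3].
have G0 : G != 0 by rewrite -msize_poly_eq0; case: (msize G) g2.
have H0 : H != 0 by apply: contra P0 => /eqP h; rewrite hGH h mulr0.
have := msizeM G0 H0; rewrite -hGH sP => hs.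
case: (irr _ _ hGH); rewrite /mconstant; move: hs g2 g3; set a := msize G; set c := msize H.
all: by case: a => [|a] //; rewrite addSn /=; lia.
Qed.

Lemma inj3 (s0 s1 s2 : 'I_7) : uniq [:: s0; s1; s2] ->
  injective (fun i : 'I_3 => nth s0 [:: s0; s1; s2] i).
Proof.
move=> u x y /eqP; rewrite nth_uniq //= => /eqP h; exact: val_inj.
Qed.

Unset Implicit Arguments.

Theorem proposition5p1
  (K : fieldType) (L : closedFieldType) (iota : {rmorphism K -> L})
  (F : {mpoly K[3]}) (b : 'I_7 -> point3 L) :
  perfect_field K ->
  ~ (2%N \in [pchar K]) ->
  is_algebraic_closure iota ->
  (* E : F = 0 is an absolutely irreducible plane cubic defined over K *)
  F \is 3.-homog -> F != 0 ->
  abs_irreducible (map_mpoly iota F) ->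
  (* B = {b 0, ..., b 6} is a 7-element subset of E(K_a) *)
  (forall i, proj_nonzero (b i)) ->
  (forall i j, proj_eq (b i) (b j) -> i = j) ->
  (forall i, (map_mpoly iota F).@[b i] = 0) ->
  (* B is a Gal(K)-orbit *)
  (forall s, in_Gal iota s -> forall i, exists j, proj_eq (gal_act s (b i)) (b j)) ->
  (forall i j, exists2 s, in_Gal iota s & proj_eq (gal_act s (b i)) (b j)) ->
  (* G_B = Perm(B) or G_B = Alt(B) *)
  ((forall pi : 'S_7, in_image_GB iota b pi) \/
   (forall pi : 'S_7, in_image_GB iota b pi <-> pi \in Alt7)) ->
  general_position7 b.
Proof.
move=> perf ch2 alg hF F0 irr hnz hdist hFb orb trans hG.
set P := map_mpoly iota F in irr hFb.
have P0 : P != 0 := map_mpoly_nz iota F0.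
have hP : P \is 3.-homog := map_mpoly_homog iota hF.
have sP : msize P = 4%N := msize_homog P0 hP.
have hA : forall pi, pi \in Alt7 -> in_image_GB iota b pi.
  by case: hG => h pi hpi; [exact: h | apply/h].
have part1 : forall f : 'I_3 -> 'I_7, injective f ->
    ~ lie_on_curve_of_degree 1 (fun i => b (f i)).
  move=> f fi hl.
  have getline (g : 'I_3 -> 'I_7) : injective g -> exists a, [/\ nzp a,
      dot a (b (g o0)) = 0, dot a (b (g o1)) = 0 & dot a (b (g o2)) = 0].
    move=> gi; have [pi hpi hpg] := G3 fi gi.
    have [Q [Q0 hQ hv]] := transport (hA _ hpi) hl.
    have [a [na ha]] := line_data hQ Q0.
    by exists a; split => //; rewrite -ha -hpg; exact: hv.
  have l2 := getline _ (inj3 (isT : uniq [:: q0; q1; q2])).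
  have l3 := getline _ (inj3 (isT : uniq [:: q0; q1; q3])).
  have [R [hR hPR]] := part1_core hnz hdist (isT : uniq [:: q0; q1; q2; q3]) hP hFb l2 l3.
  apply: (irr_contra P0 sP irr hPR).
  by rewrite msize_lin //; apply: bcross.
have hNC : NC b.
  move=> i j k a u na di dj dk.
  apply: (part1 (fun t : 'I_3 => nth i [:: i; j; k] t)); first exact: inj3.
  exists (lin a); split; [exact: lin_nz | exact: lin_homog |].
  by move=> t; rewrite lin_eval; case: (ord3_cases t) => -> /=.
split; first exact: part1.
move=> f fi hl.
have getconic (r : 'I_7) : exists Q : {mpoly L[3]},
    [/\ Q != 0, Q \is 2.-homog & forall j, j != r -> Q.@[b j] = 0].
  have [pi hpi hpf] := G6 r fi.
  have [Q [Q0 hQ hv]] := transport (hA _ hpi) hl.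
  by exists Q; split => // j jr; have [i <-] := hpf j jr; exact: hv.
have [Q6 [Q60 hQ6 v6]] := getconic q6.
have [Q5 [Q50 hQ5 v5]] := getconic q5.
have [kap hk] := UC hnz hdist hNC (isT : uniq [:: q0; q1; q2; q3; q4]) hQ6 Q60 hQ5
  (fun k hk => v6 k ltac:(by apply: contraTneq hk => ->))
  (fun k hk => v5 k ltac:(by apply: contraTneq hk => ->)).
have Q6all : forall j, Q6.@[b j] = 0.
  move=> j; case: (eqVneq j q6) => [->|]; last exact: v6.
  have : Q5.@[b q6] = 0 by apply: v5.
  rewrite hk mevalZ => /eqP; rewrite mulf_eq0 => /orP [/eqP k0|/eqP //].
  by move: Q50; rewrite hk k0 scale0r eqxx.
have [m hm] := FS hnz hdist hNC hP hQ6 Q60 hFb Q6all.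
apply: (irr_contra P0 sP irr hm).
by rewrite (msize_homog Q60 hQ6).
Qed.
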